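(* Let $S$ be a set of tasks reported as completed by an algorithm $A$ of type GroupLIS$(\beta)$ in a time interval $I$. Then at least $|S|-n$ of these tasks have their absolute task execution fully contained in $I$.
   Context: Model: $n$ processors with ids $1,\dots,n$ and a shared repository; tasks with ids, arrival times and costs are injected over time, processors may crash and restart. A task is pending if injected and its completion not yet reported. A processor repeatedly obtains the pending set, chooses a task, executes it (taking time proportional to its cost) and reports it; execution is non-preemptive and a crash loses progress. An absolute task execution of task $\tau$ is an interval $[t,t']$ such that a processor schedules $\tau$ at time $t$ and reports its completion at $t'$ without stopping its execution within $[t,t')$. An algorithm is of type GroupLIS$(\beta)$ if it partitions pending tasks into classes of equal cost, sorts each class in increasing order of arrival time, and whenever a class contains at least $\beta n^2$ pending tasks and a processor $p$ schedules a task from that class, it schedules the $(p\cdot\beta n)$-th task of the class. *)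

(* Defs.v *)
From mathcomp Require Import all_boot all_order all_algebra.
Set Implicit Arguments. Unset Strict Implicit. Unset Printing Implicit Defensive.
Import Order.TTheory GRing.Theory Num.Theory.
Local Open Scope ring_scope.

Section Model.
Variable R : archiRealFieldType.

Definition task := (nat * R * R)%type.
Definition tid (x : task) : nat := x.1.1.
Definition arr (x : task) : R := x.1.2.
Definition cost (x : task) : R := x.2.

(* Events of a run; processors are identified by nat ids (valid ids: 1..n). *)
Inductive event :=
| Inject of task & R
| Sched of nat & task & R
| Report of nat & task & R
| Crash of nat & R
| Restart of nat & R.

Definition ev_time (e : event) : R :=
  match e with
  | Inject _ t | Sched _ _ t | Report _ _ t | Crash _ t | Restart _ t => t
  end.

Definition ev_proc_ok (n : nat) (e : event) : bool :=
  match e with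
  | Inject _ _ => true
  | Sched p _ _ | Report p _ _ | Crash p _ | Restart p _ => (1 <= p <= n)%N
  end.

Definition ev_dflt : event := Crash 0 0.

Definition injected (h : seq event) (x : task) : bool :=
  has (fun e => if e is Inject y _ then y == x else false) h.
Definition reported (h : seq event) (x : task) : bool :=
  has (fun e => if e is Report _ y _ then y == x else false) h.
Definition pending (h : seq event) : seq task :=
  undup [seq x <- [seq (if e is Inject y _ then y else (0%N, 0, 0)) | e <- h
                      & if e is Inject _ _ then true else false]
         | ~~ reported h x].

Definition before (x y : task) : bool :=
  (arr x < arr y) || ((arr x == arr y) && (tid x < tid y))%N.

(* GroupLIS(beta) rule for processor p choosing task x given pending set P:
   with C the class of pending tasks of cost (cost x), if |C| >= beta n^2
   then x is the (p * beta * n)-th task of C in the order above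
   (position counted from 1; ceiling taken if p*beta*n is not integral). *)
Definition grouplis_ok (n : nat) (beta : R) (P : seq task) (p : nat) (x : task)
  : bool :=
  let C := [seq y <- P | cost y == cost x] in
  (beta * (n ^ 2)%:R <= (size C)%:R) ==>
  ((count (fun y => before y x || (y == x)) C)%:Z
     == Num.ceil (p%:R * beta * n%:R)).

Inductive pstate := Idle | Busy of task & R | Down.

Definition pstate_eq (a b : pstate) : bool :=
  match a, b with
  | Idle, Idle | Down, Down => true
  | Busy x t, Busy y u => (x == y) && (t == u)
  | _, _ => false
  end.

Definition step (p : nat) (s : pstate) (e : event) : pstate :=
  match e with
  | Sched q x t => if q == p then Busy x t else s
  | Report q _ _ => if q == p then Idle else s
  | Crash q _ => if q == p then Down else s
  | Restart q _ => if q == p then Idle else s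
  | Inject _ _ => s
  end.
Definition pstate_of (p : nat) (h : seq event) : pstate := foldl (step p) Idle h.

Definition valid_event (n : nat) (beta : R) (h : seq event) (e : event) : bool :=
  ev_proc_ok n e &&
  match e with
  | Inject x t => (t == arr x) && ~~ injected h x
                  && all (fun y => (tid y == tid x) ==> (y == x))
                       [seq (if e is Inject y _ then y else x) | e <- h]
  | Sched p x t =>
      pstate_eq (pstate_of p h) Idle && (x \in pending h)
      && grouplis_ok n beta (pending h) p x
  | Report p x t =>
      (* execution takes time equal to the cost (unit speed) *)
      if pstate_of p h is Busy y t0 then (y == x) && (t == t0 + cost x)
      else false
  | Crash p _ => ~~ pstate_eq (pstate_of p h) Down
  | Restart p _ => pstate_eq (pstate_of p h) Down
  end.

(* A (finite prefix of a) run of a GroupLIS(beta) algorithm on n processors: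
   events listed in order, with nondecreasing times, each one valid. *)
Definition grouplis_run (n : nat) (beta : R) (run : seq event) : Prop :=
  sorted (fun e f => ev_time e <= ev_time f) run /\
  forall i, (i < size run)%N -> valid_event n beta (take i run) (nth ev_dflt run i).

Definition abs_exec (run : seq event) (x : task) (t t' : R) : Prop :=
  exists p i j, [/\ (i < j < size run)%N,
    nth ev_dflt run i = Sched p x t,
    nth ev_dflt run j = Report p x t' &
    forall k, (i < k < j)%N -> forall u, nth ev_dflt run k <> Crash p u].

Definition reported_in (run : seq event) (x : task) (I : interval R) : Prop :=
  exists p j t, [/\ (j < size run)%N, nth ev_dflt run j = Report p x t & t \in I].

Definition exec_within (run : seq event) (x : task) (I : interval R) : Prop :=
  exists t t', abs_exec run x t t' /\ (forall u, t <= u <= t' -> u \in I).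

End Model.

(* Main.v *)
Require Import Defs.
From mathcomp Require Import all_boot all_order all_algebra.
From Stdlib Require Import ClassicalDescription ClassicalEpsilon.
Import Order.TTheory GRing.Theory Num.Theory.
Local Open Scope ring_scope.

Lemma itv_conv {R : realDomainType} (I : interval R) a b c :
  a \in I -> c \in I -> a <= b -> b <= c -> b \in I.
Proof.
case: I => l r; rewrite !itv_boundlr => /andP[la _] /andP[_ cu] ab bc.
rewrite (le_trans la) ?(le_trans _ cu) //= ?leBSide //=.
Qed.

Lemma step_busy {R : archiRealFieldType} p (s : pstate R) e x t0 :
  step p s e = Busy x t0 -> e = Sched p x t0 \/ s = Busy x t0.
Proof.
case: e => /=; try by move=> *; right.
- move=> q y t; case: eqP => [-> [-> ->]|_ ->]; [by left | by right].
- by move=> q y t; case: eqP => // _ ->; right.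
- by move=> q t; case: eqP => // _ ->; right.
- by move=> q t; case: eqP => // _ ->; right.
Qed.
Arguments step_busy {R p s e x t0}.

Lemma pstate_take {R : archiRealFieldType} p (run : seq (event R)) k :
  (k < size run)%N ->
  pstate_of p (take k.+1 run) = step p (pstate_of p (take k run)) (nth (ev_dflt R) run k).
Proof.
move=> hk; rewrite (take_nth (ev_dflt R) hk) /pstate_of foldl_rcons //.
Qed.
Arguments pstate_take {R p run k}.

Lemma busy_origin {R : archiRealFieldType} p (run : seq (event R)) x t0 k :
  (k <= size run)%N -> pstate_of p (take k run) = Busy x t0 ->
  exists i, [/\ (i < k)%N, nth (ev_dflt R) run i = Sched p x t0 &
    forall m, (i < m <= k)%N -> pstate_of p (take m run) = Busy x t0].
Proof.
elim: k => [|k IH] hk.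
  by rewrite take0.
rewrite pstate_take // => /[dup] hs /step_busy [he|hb].
  exists k; split => // m /andP[km mk].
  have -> : m = k.+1 by apply/eqP; rewrite eqn_leq mk km.
  by rewrite pstate_take // he.
have [i [ik hi hm]] := IH (ltnW hk) hb.
exists i; split => //; first by apply: ltnW.
move=> m /andP[im mk]; case: (ltngtP m k.+1) mk => // [mk _|-> _].
  by apply: hm; rewrite im.
by rewrite pstate_take.
Qed.
Arguments busy_origin {R p run x t0 k}.

Lemma time_le {R : archiRealFieldType} n beta (run : seq (event R)) i j :
  grouplis_run n beta run -> (i < j < size run)%N ->
  ev_time (nth (ev_dflt R) run i) <= ev_time (nth (ev_dflt R) run j).
Proof.
move=> [hs _] /andP[ij js].
have tr : transitive (fun e f : event R => ev_time e <= ev_time f).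
  by move=> a b c; apply: le_trans.
apply: (sorted_ltn_nth tr (ev_dflt R) hs) => //; rewrite inE //.
by apply: ltn_trans js.
Qed.
Arguments time_le {R n beta run i j}.

Definition Bad {R : archiRealFieldType} (run : seq (event R)) (I : interval R) p x :=
  exists i j t0 t, [/\ (i < j < size run)%N, nth (ev_dflt R) run i = Sched p x t0,
    nth (ev_dflt R) run j = Report p x t, (t \in I) && (t0 \notin I) &
    forall m, (i < m <= j)%N -> pstate_of p (take m run) = Busy x t0].

Lemma bad_exists {R : archiRealFieldType} n beta (run : seq (event R)) I x :
  grouplis_run n beta run -> reported_in run x I -> ~ exec_within run x I ->
  exists p, (1 <= p <= n)%N /\ Bad run I p x.
Proof.
move=> hr [p [j [t [js hj tI]]]] hne.
have := (proj2 hr) j js; rewrite hj /= => /andP[hp].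
case hb: (pstate_of p (take j run)) => [|y t0|] //= /andP[/eqP yx _].
subst y.
have [i [ij hi hm]] := busy_origin (ltnW js) hb.
have ijs : (i < j < size run)%N by rewrite ij.
have tt : t0 <= t by have := time_le hr ijs; rewrite hi hj.
exists p; split => //.
case t0I: (t0 \in I); last by exists i, j, t0, t; split => //; rewrite tI t0I.
exfalso; apply: hne; exists t0, t; split; last first.
  by move=> u /andP[h1 h2]; exact: (@itv_conv _ I t0 u t t0I tI h1 h2).
exists p, i, j; split => // k /andP[ik kj] u hk.
have := hm k.+1; rewrite (leqW ik) kj /= pstate_take; last by apply: ltn_trans js.
by rewrite hk /= eqxx => /(_ isT).
Qed.
Arguments bad_exists {R n beta run I x}.

Lemma bad_lt {R : archiRealFieldType} n beta (run : seq (event R)) (I : interval R) p x y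
  i1 j1 t01 t1 i2 j2 t02 t2 :
  grouplis_run n beta run ->
  (i1 < j1 < size run)%N -> t1 \in I ->
  nth (ev_dflt R) run j1 = Report p x t1 ->
  (forall m, (i1 < m <= j1)%N -> pstate_of p (take m run) = Busy x t01) ->
  (i2 < j2 < size run)%N -> nth (ev_dflt R) run i2 = Sched p y t02 ->
  nth (ev_dflt R) run j2 = Report p y t2 -> t2 \in I -> t02 \notin I ->
  (i1 < i2)%N -> False.
Proof.
move=> hr /andP[ij1 js1] t1I hj1 hm1 /andP[ij2 js2] hi2 hj2 t2I t02I i12.
have i2s : (i2 < size run)%N by apply: ltn_trans js2.
have := (proj2 hr) i2 i2s; rewrite hi2 /= => /andP[_ /andP[/andP[hid _] _]].
have j1i2 : (j1 < i2)%N.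
  rewrite ltnNge; apply/negP => h.
  by move: hid; rewrite (hm1 i2) ?i12.
have a := time_le hr (i:=j1) (j:=i2); rewrite hj1 hi2 /= in a.
have b := time_le hr (i:=i2) (j:=j2); rewrite hi2 hj2 /= in b.
move/negP: t02I; apply; apply: (@itv_conv _ I t1 t02 t2 t1I t2I).
  by apply: a; rewrite j1i2.
by apply: b; rewrite ij2.
Qed.
Arguments bad_lt {R n beta run I p x y i1 j1 t01 t1 i2 j2 t02 t2}.

Lemma bad_inj {R : archiRealFieldType} n beta (run : seq (event R)) I p x y :
  grouplis_run n beta run -> Bad run I p x -> Bad run I p y -> x = y.
Proof.
move=> hr [i1 [j1 [t01 [t1 [h1 hi1 hj1 /andP[t1I t01I] hm1]]]]]
          [i2 [j2 [t02 [t2 [h2 hi2 hj2 /andP[t2I t02I] hm2]]]]].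
case: (ltngtP i1 i2) => [lt|lt|eq].
- by case: (bad_lt hr h1 t1I hj1 hm1 h2 hi2 hj2 t2I t02I lt).
- by case: (bad_lt hr h2 t2I hj2 hm2 h1 hi1 hj1 t1I t01I lt).
- by move: hi1; rewrite eq hi2 => -[].
Qed.
Arguments bad_inj {R n beta run I p x y}.

Lemma inj_count (T : eqType) (B : seq T) (P : nat -> T -> Prop) n :
  uniq B -> (forall x, x \in B -> exists p, (1 <= p <= n)%N /\ P p x) ->
  (forall p x y, P p x -> P p y -> x = y) -> (size B <= n)%N.
Proof.
move=> uB hB hinj.
have H : forall x, exists p, x \in B -> (1 <= p <= n)%N /\ P p x.
  move=> x; case xB: (x \in B); last by exists 0%N.
  by have [p hp] := hB x xB; exists p.
pose f x := proj1_sig (constructive_indefinite_description _ (H x)).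
have hf x : x \in B -> (1 <= f x <= n)%N /\ P (f x) x.
  by rewrite /f; case: constructive_indefinite_description.
have um : uniq (map f B).
  rewrite map_inj_in_uniq // => a b aB bB fab.
  have [_ pa] := hf a aB; have [_ pb] := hf b bB.
  by rewrite fab in pa; apply: hinj pa pb.
rewrite -(size_map f) -[n](size_iota 1).
apply: uniq_leq_size => // z /mapP [x xB ->].
have [/andP[h1 h2] _] := hf x xB.
by rewrite mem_iota h1 /= add1n ltnS.
Qed.

Theorem lemma10 (R : archiRealFieldType) (n : nat) (beta : R)
  (run : seq (event R)) (I : interval R) (S : seq (task R)) :
  0 < beta ->
  grouplis_run n beta run ->
  uniq S ->
  (forall x, x \in S -> reported_in run x I) ->
  exists2 S' : seq (task R),
    [/\ uniq S', {subset S' <= S} & (size S - n <= size S')%N] &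
    forall x, x \in S' -> exec_within run x I.
Proof.
move=> _ hr uS hS.
pose good x := if excluded_middle_informative (exec_within run x I) then true else false.
have goodP x : good x -> exec_within run x I.
  by rewrite /good; case: excluded_middle_informative.
exists (filter good S); last by move=> x; rewrite mem_filter => /andP[/goodP].
split; first by apply: filter_uniq.
  by move=> x; rewrite mem_filter => /andP[].
have hb : (count (predC good) S <= n)%N.
  rewrite -size_filter.
  apply: (@inj_count _ _ (Bad run I)); first by apply: filter_uniq.
    move=> x; rewrite mem_filter => /andP[gx xS].
    apply: bad_exists hr (hS x xS) _ => he; move: gx; rewrite /= /good.
    by case: excluded_middle_informative.
  by move=> p x y; apply: bad_inj hr.
rewrite size_filter leq_subLR -(count_predC good S) addnC leq_add2r //.
Qed.
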